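(* Every whirlygig is well-bicovered.
   Context: All graphs are finite and simple; ''subgraph'' means induced subgraph. A graph is well-bicovered if every vertex-inclusion-maximal induced bipartite subgraph has the same order. A maximal outerplanar graph (MOP) is an outerplanar graph to which no edge can be added while preserving outerplanarity. A whirlygig is constructed as follows: take a MOP $M$ with $m\ge 3$ vertices whose outer cycle is $u_1u_2\cdots u_mu_1$ (indices mod $m$); for each $i$ add a new vertex $t_i$ adjacent only to $u_i$ and $u_{i+1}$, and another new vertex $s_i$ adjacent only to $t_i$ and $u_i$. The case $m=2$ is also allowed, treating the MOP $K_2$ on $u_1,u_2$ as a cycle with two edges $u_1u_2$ and $u_2u_1$ and performing the same construction (yielding $P_6^2$). *)

(* Defs.v *)
From mathcomp Require Import all_boot.
Set Implicit Arguments. Unset Strict Implicit. Unset Printing Implicit Defensive.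

Definition independent (T : finType) (e : rel T) (A : {set T}) : bool :=
  [forall x in A, forall y in A, ~~ e x y].

Definition ind_bipartite (T : finType) (e : rel T) (S : {set T}) : bool :=
  [exists A : {set T}, (A \subset S) && independent e A && independent e (S :\: A)].

Definition well_bicovered (T : finType) (e : rel T) : Prop :=
  forall S1 S2 : {set T},
    maxset (ind_bipartite e) S1 -> maxset (ind_bipartite e) S2 -> #|S1| = #|S2|.

Definition cyc_adj (m : nat) (i j : 'I_m) : bool :=
  (val j == (val i).+1 %% m) || (val i == (val j).+1 %% m).

(* chords {a,b} and {c,d} of the polygon with vertices 0..m-1 (in this cyclic
   order) cross in their interiors *)
Definition crossing (m : nat) (a b c d : 'I_m) : bool :=
  let a' := minn a b in let b' := maxn a b in
  let c' := minn c d in let d' := maxn c d in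
  ((a' < c') && (c' < b') && (b' < d')) || ((c' < a') && (a' < d') && (d' < b')).

(* ch is a maximal set of pairwise non-crossing chords of the m-gon,
   i.e. a triangulation of the polygon: the graph with edges
   cycle edges + ch is a MOP whose outer cycle is u_0 u_1 ... u_{m-1} u_0. *)
Definition MOP_chords (m : nat) (ch : rel 'I_m) : Prop :=
  [/\ symmetric ch,
      irreflexive ch,
      (forall i j, ch i j -> ~~ cyc_adj i j),
      (forall a b c d, ch a b -> ch c d -> ~~ crossing a b c d) &
      (forall i j, i != j -> ~~ cyc_adj i j -> ~~ ch i j ->
         exists c d, ch c d && crossing i j c d)].

Definition mop_adj (m : nat) (ch : rel 'I_m) : rel 'I_m :=
  fun i j => cyc_adj i j || ch i j.

(* vertices: inl i = u_i, inr (inl i) = t_i, inr (inr i) = s_i *)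
Definition wvert (m : nat) : finType := ('I_m + ('I_m + 'I_m))%type.

(* one-directional edge list *)
Definition whirl_edge0 (m : nat) (ch : rel 'I_m) (x y : wvert m) : bool :=
  match x, y with
  | inl i, inl j => mop_adj ch i j
  | inr (inl i), inl j => (j == i) || (val j == (val i).+1 %% m)
  | inr (inr i), inr (inl j) => j == i
  | inr (inr i), inl j => j == i
  | _, _ => false
  end.

Definition whirl_adj (m : nat) (ch : rel 'I_m) : rel (wvert m) :=
  fun x y => whirl_edge0 ch x y || whirl_edge0 ch y x.

(* Main.v *)
Require Import Defs.
From mathcomp Require Import all_boot.
From mathcomp Require Import zify.
Set Implicit Arguments. Unset Strict Implicit. Unset Printing Implicit Defensive.

Section Gen.
Variables (T : finType) (e : rel T).

Lemma indepP (A : {set T}) :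
  reflect (forall x y, x \in A -> y \in A -> ~~ e x y) (independent e A).
Proof.
apply: (iffP idP).
- move=> /forallP H x y hx hy. by have /implyP /(_ hx) /forallP /(_ y) /implyP := H x; apply.
- move=> H; apply/forallP => x; apply/implyP => hx; apply/forallP => y; apply/implyP => hy.
  exact: H.
Qed.

Lemma bipP (S : {set T}) :
  reflect (exists A : {set T}, [/\ A \subset S, independent e A & independent e (S :\: A)])
    (ind_bipartite e S).
Proof.
apply: (iffP existsP) => [[A /andP [/andP [h1 h2] h3]]|[A [h1 h2 h3]]]; exists A.
  by split. by rewrite h1 h2 h3.
Qed.

Lemma indep_sub (A B : {set T}) : B \subset A -> independent e A -> independent e B.
Proof.
move=> /subsetP sBA /indepP H; apply/indepP => x y hx hy; apply: H; exact: sBA.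
Qed.

Lemma bip_sub (S S' : {set T}) : S' \subset S -> ind_bipartite e S -> ind_bipartite e S'.
Proof.
move=> sub /bipP [A [h1 h2 h3]]; apply/bipP; exists (A :&: S'); split.
- exact: subsetIr.
- apply: indep_sub h2; exact: subsetIl.
- apply: indep_sub h3; apply/subsetP => x; rewrite !inE => /andP [/negbTE h hx].
  rewrite hx andbT in h; by rewrite h (subsetP sub x hx).
Qed.

Lemma bip_add (S : {set T}) v w : symmetric e -> ~~ e v v -> v \notin S ->
  ind_bipartite e S -> (forall x, x \in S -> e v x -> x = w) ->
  ind_bipartite e (v |: S).
Proof.
move=> sym irr vS /bipP [A [h1 /indepP h2 /indepP h3]] Hw.
have vA : v \notin A by apply: contra vS; apply: (subsetP h1).
case wA: (w \in A).
- apply/bipP; exists A; split.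
  + apply: subset_trans h1 _; exact: subsetUr.
  + exact/indepP.
  + apply/indepP => x y; rewrite !inE => /andP [xA xS] /andP [yA yS].
    case/orP: xS => [/eqP->|xS]; case/orP: yS => [/eqP->|yS] //.
    * apply/negP => /(Hw _ yS) yw; by rewrite yw wA in yA.
    * rewrite sym; apply/negP => /(Hw _ xS) xw; by rewrite xw wA in xA.
    * by apply: h3; rewrite inE ?xA ?yA.
- apply/bipP; exists (v |: A); split.
  + by rewrite setUS.
  + apply/indepP => x y; rewrite !inE => xS yS.
    case/orP: xS => [/eqP->|xS]; case/orP: yS => [/eqP->|yS] //.
    * apply/negP => /(Hw _ (subsetP h1 _ yS)) yw; by rewrite -yw yS in wA.
    * rewrite sym; apply/negP => /(Hw _ (subsetP h1 _ xS)) xw; by rewrite -xw xS in wA.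
    * exact: h2.
  + apply/indepP => x y; rewrite !inE => /andP [xA xS] /andP [yA yS].
    rewrite negb_or in xA; rewrite negb_or in yA.
    case/andP: xA => xv xA; case/andP: yA => yv yA.
    rewrite (negbTE xv) /= in xS; rewrite (negbTE yv) /= in yS.
    by apply: h3; rewrite inE ?xA ?yA.
Qed.

Lemma bip_tri (S : {set T}) a b c : symmetric e -> e a b -> e b c -> e a c ->
  a \in S -> b \in S -> c \in S -> ~~ ind_bipartite e S.
Proof.
move=> sym ab bc ac aS bS cS; apply/negP => /bipP [A [h1 /indepP h2 /indepP h3]].
have H2 x y : x \in A -> y \in A -> e x y -> False by move=> hx hy; apply/negP; apply: h2.
have H3 x y : x \in S -> y \in S -> x \notin A -> y \notin A -> e x y -> False.
  by move=> ? ? ? ?; apply/negP; apply: h3; rewrite inE; apply/andP.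
case aA: (a \in A); case bA: (b \in A); case cA: (c \in A);
  first [exact: (H2 a b) | exact: (H2 b c) | exact: (H2 a c)
        | exact: (H3 a b) | exact: (H3 b c) | exact: (H3 a c) | idtac].
all: try (apply: (H3 a b); by rewrite ?aA ?bA).
all: try (apply: (H3 b c); by rewrite ?cA ?bA).
all: try (apply: (H3 a c); by rewrite ?aA ?cA).
Qed.
End Gen.

Section W.
Variables (m : nat) (hm : 2 <= m) (ch : rel 'I_m) (hch : MOP_chords ch).
Local Notation e := (whirl_adj ch).
Definition uu (i : 'I_m) : wvert m := inl i.
Definition tt (i : 'I_m) : wvert m := inr (inl i).
Definition ss (i : 'I_m) : wvert m := inr (inr i).

Lemma m0 : 0 < m. Proof. by apply: leq_trans hm. Qed.
Definition nxt (i : 'I_m) : 'I_m := Ordinal (ltn_pmod i.+1 m0).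

Lemma wsym : symmetric e.
Proof. by move=> x y; rewrite /whirl_adj orbC. Qed.

Lemma wirr x : ~~ e x x.
Proof.
case: hch => _ irr _ _ _.
case: x => [i|[i|i]]; rewrite /whirl_adj /= ?orbb //.
rewrite /mop_adj /cyc_adj irr orbF orbb.
have hk : val i < m := ltn_ord i.
case: (ltngtP (val i).+1 m) => h.
- by rewrite modn_small //; apply/eqP; lia.
- lia.
- have -> : (val i).+1 %% m = 0 by rewrite h modnn.
  apply/eqP => k0; by move: hm; rewrite -h k0.
Qed.

Lemma nbr_s i x : e (ss i) x -> x = tt i \/ x = uu i.
Proof.
case: x => [j|[j|j]]; rewrite /whirl_adj /= ?orbF.
- by move/eqP->; right.
- by move/eqP->; left.
- by [].
Qed.

Lemma nbr_t i x : e (tt i) x -> [\/ x = ss i, x = uu i | x = uu (nxt i)].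
Proof.
case: x => [j|[j|j]]; rewrite /whirl_adj /= ?orbF.
- case/orP => [/eqP->|/eqP h]; first by constructor 2.
  constructor 3; congr inl; apply: val_inj => /=; exact: h.
- by [].
- by move/eqP->; constructor 1.
Qed.

Lemma e_st i : e (ss i) (tt i). Proof. by rewrite /whirl_adj /= eqxx. Qed.
Lemma e_su i : e (ss i) (uu i). Proof. by rewrite /whirl_adj /= eqxx. Qed.
Lemma e_tu i : e (tt i) (uu i). Proof. by rewrite /whirl_adj /= eqxx. Qed.

Lemma tri_le2 (S : {set wvert m}) i : ind_bipartite e S ->
  (ss i \in S) + (tt i \in S) + (uu i \in S) <= 2.
Proof.
move=> hb.
have := @bip_tri _ e S _ _ _ wsym (e_st i) (e_tu i) (e_su i).
case: (ss i \in S); case: (tt i \in S); case: (uu i \in S) => //.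
by move=> /(_ erefl erefl erefl); rewrite hb.
Qed.

Lemma tri_ge2 (S : {set wvert m}) i : maxset (ind_bipartite e) S ->
  2 <= (ss i \in S) + (tt i \in S) + (uu i \in S).
Proof.
move=> /maxsetP [hb hmax].
rewrite leqNgt; apply/negP => hlt.
have contra v : v \notin S -> ind_bipartite e (v |: S) -> False.
  move=> vS /hmax H; have := H (subsetUr _ _).
  move/setP/(_ v); rewrite !inE eqxx /= => vS'; by rewrite -vS' in vS.
case sS: (ss i \in S).
- have tS : tt i \notin S by move: hlt; rewrite sS; case: (tt i \in S).
  have uS : uu i \notin S by move: hlt; rewrite sS; case: (tt i \in S); case: (uu i \in S).
  have b0 : ind_bipartite e (S :\ ss i) by apply: bip_sub hb; exact: subsetDl.
  have b1 : ind_bipartite e (tt i |: (S :\ ss i)).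
    apply: (@bip_add _ _ _ _ (uu (nxt i)) wsym (wirr _)) => //.
      by rewrite !inE negb_and tS orbT.
    move=> x; rewrite !inE => /andP [xs xS] /nbr_t [xe|xe|xe] //.
    + by rewrite xe eqxx in xs.
    + by rewrite -xe xS in uS.
  have b2 : ind_bipartite e (ss i |: (tt i |: (S :\ ss i))).
    apply: (@bip_add _ _ _ _ (tt i) wsym (wirr _)) => //.
      by rewrite !inE eqxx.
    move=> x; rewrite !inE => /orP [/eqP -> //|/andP [xs xS]] /nbr_s [xe|xe] //.
    by rewrite -xe xS in uS.
  apply: (contra (tt i) tS).
  suff -> : tt i |: S = ss i |: (tt i |: (S :\ ss i)) by [].
  apply/setP => x; rewrite !inE.
  case: (eqVneq x (ss i)) => [->|xs]; first by rewrite sS orbT.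
  by [].
- apply: (contra (ss i)); first by rewrite sS.
  have [w Hw] : exists w, forall x, x \in S -> e (ss i) x -> x = w.
    case tS: (tt i \in S).
    + exists (tt i) => x xS /nbr_s [//|xe].
      by move: hlt; rewrite sS tS -xe xS.
    + exists (uu i) => x xS /nbr_s [xe|//].
      by rewrite -xe xS in tS.
  apply: (bip_add wsym (wirr _)) Hw => //; by rewrite sS.
Qed.

End W.
Theorem mainTheorem18 (m : nat) (hm : 2 <= m) (ch : rel 'I_m) :
  MOP_chords ch -> well_bicovered (whirl_adj ch).
Proof.
move=> hch.
suff H S : maxset (ind_bipartite (whirl_adj ch)) S -> #|S| = m * 2.
  by move=> S1 S2 /H -> /H ->.
move=> hS.
have cnt : #|S| = \sum_(i < m) ((ss i \in S) + (tt i \in S) + (uu i \in S)).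
  rewrite -sum1_card big_mkcond big_sumType /= big_sumType /= -!big_split /=.
  apply: eq_bigr => i _; rewrite /ss /tt /uu.
  by case: (inl i \in S); case: (inr (inl i) \in S); case: (inr (inr i) \in S).
rewrite cnt (eq_bigr (fun _ => 2)) ?sum_nat_const ?card_ord //.
move=> i _; apply/eqP; rewrite eqn_leq (tri_le2 (ch:=ch)) ?(tri_ge2 hm hch) //.
by case/maxsetP: hS.
Qed.
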